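(* InpRS achieves $\epsilon$-LDP and guarantees that $\| \mathcal{C}^\beta(t)- {\mathcal{C}^{\beta}(t^* )}\|_1 = \tilde{O}\Big(\frac{2^{(d+k)/2}}{\epsilon\sqrt{N}}\Big)$ with constant probability.
   Context: There are $N$ users; user $i$ holds a vector in $\{0,1\}^d$, represented as an indicator vector $t_i\in\{0,1\}^{2^d}$ with a single 1 at index $j_i$, and $t=\sum_{i=1}^N t_i/N$ is the full (normalized) distribution. A mechanism $F$ is $\epsilon$-LDP if for all pairs of such indicator inputs $t_i,t'_i$ and every output $R$, $\Pr[F(t_i)=R]\le e^{\epsilon}\Pr[F(t'_i)=R]$. For $\beta\in\{0,1\}^d$ with $k$ ones, the $k$-way marginal operator is $\mathcal{C}^\beta(t)[\gamma]=\sum_{\eta:\eta\wedge\beta=\gamma} t[\eta]$ for $\gamma$ ranging over the $2^k$ values with support inside $\beta$. The algorithm InpRS (parallel randomized response on input): each user $i$ perturbs its value $t_i[\ell]$ at every index $\ell\in[2^d]$ independently using randomized response with privacy parameter $\epsilon/2$ (report the true bit with probability $p_r=e^{\epsilon/2}/(1+e^{\epsilon/2})$, otherwise the flipped bit) and releases all pairs $\langle \ell, b^*_{i,\ell}\rangle$. The aggregator debiases each report to an unbiased estimate (observed fraction $F$ mapped to $(F+p_r-1)/(2p_r-1)$), averages over users to obtain a reconstructed distribution $t^*$, and answers marginal $\beta$ by $\mathcal{C}^\beta(t^* )$. $\tilde{O}$ suppresses factors logarithmic in $N,d,k,\epsilon$; the number of users is assumed large relative to the number of cells, i.e. $N$ at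 least (up to log factors) proportional to $2^d$, and $\epsilon$ is bounded by a constant (the proof uses $0<\epsilon<2$). *)

(* Defs.v *)
From HB Require Import structures.
From mathcomp Require Import all_boot all_order all_algebra.
From mathcomp Require Import all_classical all_reals all_analysis.
Set Implicit Arguments. Unset Strict Implicit. Unset Printing Implicit Defensive.
Import Order.TTheory GRing.Theory Num.Theory.
Local Open Scope ring_scope.

Section InpRS.
Variable R : realType.

Definition cell (d : nat) := {ffun 'I_d -> bool}.

(* Randomized response with parameter eps/2: prob. of reporting the true bit. *)
Definition p_r (eps : R) : R := expR (eps / 2) / (1 + expR (eps / 2)).

Definition indic (d : nat) (j : cell d) : {ffun cell d -> bool} :=
  [ffun l => l == j].

Definition inprs_prob (d : nat) (eps : R) (j : cell d) (b : {ffun cell d -> bool}) : R :=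
  \prod_(l : cell d) (if b l == indic j l then p_r eps else 1 - p_r eps).

Definition is_LDP (In Out : finType) (eps : R) (F : In -> Out -> R) : Prop :=
  forall (x x' : In) (o : Out), F x o <= expR eps * F x' o.

Definition joint_prob (d N : nat) (eps : R) (js : {ffun 'I_N -> cell d})
  (B : {ffun 'I_N -> {ffun cell d -> bool}}) : R :=
  \prod_(i < N) inprs_prob eps (js i) (B i).

Definition Pr (d N : nat) (eps : R) (js : {ffun 'I_N -> cell d})
  (E : pred {ffun 'I_N -> {ffun cell d -> bool}}) : R :=
  \sum_(B | E B) joint_prob eps js B.

Definition true_dist (d N : nat) (js : {ffun 'I_N -> cell d}) : {ffun cell d -> R} :=
  [ffun eta => (\sum_(i < N) (indic (js i) eta)%:R) / N%:R].

(* Aggregator's reconstruction t^* (debiased average of the reports). *)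
Definition recon (d N : nat) (eps : R) (B : {ffun 'I_N -> {ffun cell d -> bool}})
  : {ffun cell d -> R} :=
  [ffun eta => (\sum_(i < N) (((B i eta)%:R + p_r eps - 1) / (2 * p_r eps - 1)))
               / N%:R].

Definition cand (d : nat) (x y : cell d) : cell d := [ffun a => x a && y a].

Definition supp_in (d : nat) (beta gamma : cell d) : bool :=
  [forall a, gamma a ==> beta a].

Definition marginal (d : nat) (beta : cell d) (t : {ffun cell d -> R}) (gamma : cell d) : R :=
  \sum_(eta : cell d | cand eta beta == gamma) t eta.

Definition marg_L1 (d : nat) (beta : cell d) (t t' : {ffun cell d -> R}) : R :=
  \sum_(gamma : cell d | supp_in beta gamma)
     `|marginal beta t gamma - marginal beta t' gamma|.

Definition weight (d : nat) (beta : cell d) : nat := #|[set a | beta a]|.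

(* Polylogarithmic factor in N, d, k, eps (the factors suppressed by O~). *)
Definition polylog (N d k : nat) (eps : R) : R :=
  2 + ln N%:R + ln d.+1%:R + ln k.+1%:R + `|ln eps|.

End InpRS.

(* Main.v *)
Require Import Defs.
From HB Require Import structures.
From mathcomp Require Import all_boot all_order all_algebra.
From mathcomp Require Import all_classical all_reals all_analysis.
From mathcomp Require Import ring lra.
Import Order.TTheory GRing.Theory Num.Theory.
Local Open Scope ring_scope.
Section Gen.
Variable R : realType.
Variables I J : finType.

Lemma sum_prod_pair (F : I * J -> bool -> R) :
  \sum_(B : {ffun I -> {ffun J -> bool}}) \prod_(p : I * J) F p (B p.1 p.2)
  = \prod_(p : I * J) (F p true + F p false).
Proof.
transitivity (\sum_(B : {ffun I -> {ffun J -> bool}}) \prod_i \prod_j F (i,j) (B i j)).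
  by apply: eq_bigr => B _; rewrite pair_bigA; apply: eq_bigr => -[i j].
rewrite -(bigA_distr_bigA (fun i (f : {ffun J -> bool}) => \prod_j F (i,j) (f j))).
under eq_bigr => i _ do rewrite -(bigA_distr_bigA (fun j (b : bool) => F (i,j) b)).
rewrite pair_bigA; apply: eq_bigr => -[i j] _; by rewrite big_bool.
Qed.
Variable q : I * J -> bool -> R.
Hypothesis hq1 : forall p, q p true + q p false = 1.
Definition PB (B : {ffun I -> {ffun J -> bool}}) := \prod_(p : I * J) q p (B p.1 p.2).

Lemma E_prod (phi : I * J -> bool -> R) :
  \sum_B PB B * \prod_(p : I * J) phi p (B p.1 p.2)
  = \prod_(p : I * J) (q p true * phi p true + q p false * phi p false).
Proof.
rewrite -(sum_prod_pair (fun p b => q p b * phi p b)); apply: eq_bigr => B _; by rewrite /PB -big_split.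
Qed.

Lemma sumPB : \sum_B PB B = 1.
Proof.
transitivity (\sum_B PB B * \prod_(p : I * J) (fun _ _ => 1 : R) p (B p.1 p.2)).
  by apply: eq_bigr => B _; rewrite big1 ?mulr1.
rewrite (E_prod (fun _ _ => 1)) big1 // => p _; by rewrite !mulr1 hq1.
Qed.

Lemma single_prod (s : I * J) (f : bool -> R) (B : {ffun I -> {ffun J -> bool}}) :
  \prod_(p : I * J) (if p == s then f (B p.1 p.2) else 1) = f (B s.1 s.2).
Proof.
rewrite (bigD1 s) //= eqxx big1 ?mulr1 // => p /negbTE -> //.
Qed.

Variable x : I * J -> bool -> R.
Hypothesis mean0 : forall p, q p true * x p true + q p false * x p false = 0.
Definition vv p := q p true * x p true ^+ 2 + q p false * x p false ^+ 2.

Lemma E_cross s s' :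
  \sum_B PB B * (x s (B s.1 s.2) * x s' (B s'.1 s'.2)) = if s == s' then vv s else 0.
Proof.
pose phi p b := (if p == s then x s b else 1) * (if p == s' then x s' b else 1).
transitivity (\sum_B PB B * \prod_(p : I * J) phi p (B p.1 p.2)).
  apply: eq_bigr => B _; rewrite /phi big_split /=.
  by rewrite (single_prod s (x s)) (single_prod s' (x s')).
rewrite (E_prod phi) (bigD1 s) //= /phi eqxx.
have [<-|ne] := eqVneq s s'.
  rewrite big1 ?mulr1; first by rewrite /vv !expr2.
  by move=> p /negbTE ->; rewrite !mulr1 hq1.
by rewrite !mulr1 mean0 mul0r.
Qed.

Lemma E_sq (a : I * J -> R) :
  \sum_B PB B * (\sum_(p : I * J) a p * x p (B p.1 p.2)) ^+ 2
  = \sum_(p : I * J) a p ^+ 2 * vv p.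
Proof.
transitivity (\sum_B \sum_(s : I * J) \sum_(s' : I * J)
   a s * a s' * (PB B * (x s (B s.1 s.2) * x s' (B s'.1 s'.2)))).
  apply: eq_bigr => B _; rewrite expr2 mulr_suml mulr_sumr.
  apply: eq_bigr => s _; rewrite mulr_sumr mulr_sumr.
  apply: eq_bigr => s' _; ring.
rewrite exchange_big; apply: eq_bigr => s _.
rewrite exchange_big /=.
under eq_bigr => s' _ do rewrite -mulr_sumr E_cross.
rewrite (bigD1 s) //= eqxx big1 ?addr0; first by rewrite expr2.
by move=> s' ne; rewrite eq_sym (negbTE ne) mulr0.
Qed.
End Gen.
Section Spec.
Variable R : realType.
Variables (d N : nat) (eps : R) (js : {ffun 'I_N -> cell d}) (beta : cell d).
Let pr := p_r eps.
Hypothesis hpr : 2 * pr - 1 != 0.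

Definition qq (p : 'I_N * cell d) (b : bool) : R :=
  if b == Defs.indic (js p.1) p.2 then pr else 1 - pr.
Definition xx (p : 'I_N * cell d) (b : bool) : R :=
  ((b%:R + pr - 1) / (2 * pr - 1)) - (Defs.indic (js p.1) p.2)%:R.
Definition VV : R := pr * (1 - pr) / (2 * pr - 1) ^+ 2.

Lemma qq1 p : qq p true + qq p false = 1.
Proof. rewrite /qq; case: (Defs.indic _ _) => /=; ring. Qed.

Lemma xx_mean0 p : qq p true * xx p true + qq p false * xx p false = 0.
Proof. rewrite /qq /xx; case: (Defs.indic _ _) => /=; field => //. Qed.

Lemma xx_vv p : @vv _ _ _ qq xx p = VV.
Proof. rewrite /vv /qq /xx /VV; case: (Defs.indic _ _) => /=; field => //. Qed.

Lemma joint_PB B : joint_prob eps js B = @PB _ _ _ qq B.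
Proof.
rewrite /joint_prob /PB /inprs_prob -(pair_bigA _ (fun i l => qq (i, l) (B i l))).
by [].
Qed.

Definition aa (gamma : cell d) (p : 'I_N * cell d) : R :=
  (cand p.2 beta == gamma)%:R / N%:R.

Lemma err_eq B gamma :
  marginal beta (recon eps B) gamma - marginal beta (true_dist R js) gamma
  = \sum_(p : 'I_N * cell d) aa gamma p * xx p (B p.1 p.2).
Proof.
rewrite /marginal -sumrB big_mkcond /=.
rewrite -(pair_bigA _ (fun i eta => aa gamma (i,eta) * xx (i,eta) (B i eta))) exchange_big /=.
apply: eq_bigr => eta _; rewrite !ffunE /aa /=.
case: eqP => _ /=.
  rewrite -mulrBl -sumrB mulr_suml; apply: eq_bigr => i _; by rewrite /xx /= div1r mulrC.
by rewrite big1 // => i _; rewrite !mul0r.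
Qed.
End Spec.
Section Arith.
Variable R : realType.

Lemma amgm_sum (T : finType) (P : pred T) (y : T -> R) (c : R) : 0 < c ->
  \sum_(g | P g) `|y g| <= ((\sum_(g | P g) y g ^+ 2) / c + #|P|%:R * c) / 2.
Proof.
move=> c0.
apply: (le_trans (y := \sum_(g | P g) ((y g ^+ 2) / c + c) / 2)).
  apply: ler_sum => g _.
  have h : `|y g| ^+ 2 = y g ^+ 2 by rewrite real_normK // num_real.
  have hn : 0 <= `|y g| by [].
  rewrite (ler_pdivlMr (z := 2)) //.
  rewrite -(ler_pM2r c0) mulrDl divfK ?gt_eqF // -h.
  have := sqr_ge0 (`|y g| - c); move: (`|y g|) => a; nra.
rewrite -mulr_suml big_split /= -mulr_suml.
have -> : \sum_(g | P g) c = c *+ #|P| by rewrite -sumr_const; apply: eq_bigl.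
by rewrite mulr_natl.
Qed.

Lemma pr_facts (eps : R) : 0 < eps ->
  let e := expR (eps / 2) in
  p_r eps = e / (1 + e) /\ 1 - p_r eps = 1 / (1 + e) /\ 1 < e.
Proof.
move=> he e; have e1 : 1 < e by rewrite /e expR_gt1 divr_gt0.
have e0 : 1 + e != 0 by rewrite gt_eqF //; lra.
split; first by [].
split=> //; rewrite /p_r -/e; field => //.
Qed.

Lemma VV_bound (eps : R) : 0 < eps -> eps < 2 ->
  2 * p_r eps - 1 != 0 /\ 0 <= p_r eps /\ p_r eps <= 1 /\ 0 <= VV R eps /\
  VV R eps * eps ^+ 2 <= 8.
Proof.
move=> he0 he2; have [hp [hq e1]] := pr_facts eps he0.
set e := expR (eps / 2) in hp hq e1.
have ge : 1 + eps / 2 <= e by apply: expR_ge1Dx.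
have e0 : 1 + e != 0 by rewrite gt_eqF //; lra.
have u0 : e - 1 != 0 by rewrite gt_eqF //; lra.
have h2 : 2 * p_r eps - 1 = (e - 1) / (1 + e) by rewrite hp; field.
have p0 : 0 <= p_r eps by rewrite hp divr_ge0 //; lra.
have p1 : p_r eps <= 1 by rewrite -subr_ge0 hq divr_ge0 //; lra.
have hV : VV R eps = e / (e - 1) ^+ 2.
  rewrite /VV hq h2 hp; field; rewrite e0 u0 //.
split; first by rewrite h2 mulf_neq0 // invr_eq0.
split=> //; split=> //; split.
  by rewrite hV divr_ge0 ?sqr_ge0 // ltW // (lt_trans ltr01).
rewrite hV mulrAC ler_pdivrMr; last by rewrite exprn_gt0 // subr_gt0.
set u := e - 1.
have eu : e = 1 + u by rewrite /u; ring.
have hu : eps / 2 <= u by rewrite /u lerBrDl.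
rewrite eu; set h := eps / 2 in hu.
have epsh : eps = 2 * h by rewrite /h; field.
rewrite epsh.
have h0 : 0 < h by rewrite /h divr_gt0.
have h1 : h < 1 by rewrite /h ltr_pdivrMr //; lra.
clearbody u h; clear -hu h0 h1.
have a1 : h * h <= u * u by nra.
have u0 : 0 < u by lra.
have a3 : h * h * u <= h * u * u.
  have : h * u * h <= h * u * u by rewrite ler_pM2l ?mulr_gt0.
  by rewrite mulrAC.
have a4 : h * u * u <= u * u.
  by rewrite -mulrA ler_piMl ?mulr_ge0 // ltW.
have a2 : h * h * u <= u * u by lra.
rewrite !expr2; nra.
Qed.
End Arith.
Lemma count_supp (d : nat) (beta : cell d) :
  (#|[pred g : cell d | supp_in beta g]| <= 2 ^ weight beta)%N.
Proof.
pose S := {a : 'I_d | beta a}.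
pose f (g : cell d) : {ffun S -> bool} := [ffun a : S => g (val a)].
have : {in [pred g : cell d | supp_in beta g] &, injective f}.
  move=> g1 g2; rewrite !inE /supp_in => /forallP h1 /forallP h2 E.
  apply/ffunP => a; case Hb: (beta a).
    by have := congr1 (fun h : {ffun S -> bool} => h (exist _ a Hb : S)) E; rewrite !ffunE.
  have := h1 a; have := h2 a; rewrite Hb !implybF => /negbTE -> /negbTE -> //.
move/leq_card_in; rewrite card_ffun card_bool card_sig /weight.
by rewrite (eq_card (B := [set a | beta a])) // => a; rewrite inE.
Qed.

Lemma ldp (R : realType) (d : nat) (eps : R) : 0 < eps ->
  is_LDP eps (@inprs_prob R d eps).
Proof.
move=> he j j' o.
have [hp [hq e1]] := @pr_facts R eps he.
set e := expR (eps / 2) in hp hq e1.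
have w0 : 0 < (1 + e)^-1 by rewrite invr_gt0; lra.
rewrite div1r in hq.
set w := (1 + e)^-1 in hp hq w0.
rewrite mulrC in hp.
pose r (l : cell d) := (if l == j then e else 1) * (if l == j' then e else 1).
have single (j0 : cell d) : \prod_(l : cell d) (if l == j0 then e else 1) = e.
  by rewrite (bigD1 j0) //= eqxx big1 ?mulr1 // => l /negbTE ->.
have hr : \prod_(l : cell d) r l = expR eps.
  by rewrite big_split /= !single -expRD; congr expR; field.
rewrite /inprs_prob -hr -big_split /=.
apply: ler_prod => l _.
rewrite /r !ffunE hq hp.
case: (l == j); case: (l == j'); case: (o l) => /=; apply/andP; split; nra.
Qed.
Lemma EQ_bound (R : realType) (d N : nat) (eps : R) (js : {ffun 'I_N -> cell d})
  (beta : cell d) :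
  0 < eps -> eps < 2 -> (0 < N)%N ->
  \sum_B PB R _ _ (qq R d N eps js) B *
     (\sum_(gamma | supp_in beta gamma)
        (\sum_p aa R d N beta gamma p * xx R d N eps js p (B p.1 p.2)) ^+ 2)
  <= VV R eps * 2 ^+ d / N%:R.
Proof.
move=> he0 he2 hN.
have [hpr [p0 [p1 [V0 V8]]]] := VV_bound R eps he0 he2.
have N0 : 0 < N%:R :> R by rewrite ltr0n.
under eq_bigr => B _ do rewrite mulr_sumr.
rewrite exchange_big /=.
under eq_bigr => g _ do rewrite (E_sq _ _ _ _ (qq1 R d N eps js) _ (xx_mean0 R d N eps js hpr)).
under eq_bigr => g _ do under eq_bigr => p _ do rewrite (xx_vv R d N eps js hpr).
apply: (le_trans (y := \sum_g \sum_p aa R d N beta g p ^+ 2 * VV R eps)).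
  rewrite [X in _ <= X](bigID (fun g => supp_in beta g)) /= lerDl.
  by apply: sumr_ge0 => g _; apply: sumr_ge0 => p _; rewrite mulr_ge0 ?sqr_ge0.
rewrite exchange_big /=.
have inner p : \sum_g aa R d N beta g p ^+ 2 * VV R eps = VV R eps / N%:R ^+ 2.
  rewrite (bigD1 (cand p.2 beta)) //= big1 ?addr0.
    by rewrite /aa eqxx expr_div_n expr1n mulrC mul1r.
  by move=> g /negbTE ne; rewrite /aa eq_sym ne mul0r expr0n /= mul0r.
under eq_bigr => p _ do rewrite inner.
rewrite sumr_const card_prod card_ord card_ffun card_bool card_ord.
rewrite -[_ *+ (N * 2 ^ d)]mulr_natr natrM natrX.
rewrite le_eqVlt; apply/orP; left; apply/eqP; field; rewrite gt_eqF //.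
Qed.
Theorem theorem2 (R : realType) :
  exists (C : R) (a : nat) (c0 : R), 0 < C /\ 0 < c0 /\
  forall (d N k : nat) (eps : R) (beta : cell d) (js : {ffun 'I_N -> cell d}),
    0 < eps -> eps < 2 -> (0 < N)%N -> weight beta = k ->
    is_LDP eps (@inprs_prob R d eps)
    /\
    c0 <= Pr eps js
      (fun B => marg_L1 beta (true_dist R js) (recon eps B)
                <= C * polylog N d k eps ^+ a
                   * Num.sqrt (2 ^+ (d + k)) / (eps * Num.sqrt N%:R)).
Proof.
exists 4, 0%N, (1/2); split; first lra; split; first lra.
move=> d N k eps beta js he0 he2 hN hk.
split; first exact: ldp.
have [hpr [p0 [p1 [V0 V8]]]] := VV_bound R eps he0 he2.
rewrite expr0 mulr1.
have N0 : 0 < N%:R :> R by rewrite ltr0n.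
set T0 := 4 * Num.sqrt (2 ^+ (d + k)) / (eps * Num.sqrt N%:R).
have T0pos : 0 < T0.
  by rewrite /T0 divr_gt0 ?mulr_gt0 ?sqrtr_gt0 ?exprn_gt0.
set K : R := 2 ^+ k.
have K0 : 0 < K by rewrite exprn_gt0.
set thr := T0 ^+ 2 / K.
pose P := PB R _ _ (qq R d N eps js).
pose err gamma (B : {ffun 'I_N -> {ffun cell d -> bool}}) :=
  \sum_p aa R d N beta gamma p * xx R d N eps js p (B p.1 p.2).
pose Q B := \sum_(gamma | supp_in beta gamma) err gamma B ^+ 2.
have key B : Q B <= thr -> marg_L1 beta (true_dist R js) (recon eps B) <= T0.
  move=> hQ; rewrite /marg_L1.
  under eq_bigr => g _ do rewrite distrC err_eq.
  have c0 : 0 < T0 / K by rewrite divr_gt0.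
  apply: le_trans (amgm_sum _ _ _ _ _ c0) _.
  have hn : #|[pred g : cell d | supp_in beta g]|%:R <= K.
    by rewrite /K -natrX ler_nat -hk count_supp.
  have h1 : Q B / (T0 / K) <= T0.
    rewrite ler_pdivrMr // (le_trans hQ) // /thr.
    rewrite le_eqVlt; apply/orP; left; apply/eqP; field; rewrite gt_eqF //.
  have h2 : #|[pred g : cell d | supp_in beta g]|%:R * (T0 / K) <= T0.
    apply: (le_trans (y := K * (T0 / K))); first by rewrite ler_pM2r.
    rewrite le_eqVlt; apply/orP; left; apply/eqP; field; rewrite gt_eqF //.
  rewrite ler_pdivrMr //; move: h1 h2; rewrite /Q /err.
  set A := (X in X / (T0 / K) <= T0 -> _).
  set n := (X in _ -> X * _ <= _ -> _).
  move=> h1 h2.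
  have -> : #|supp_in beta|%:R = n by [].
  rewrite -/A; lra.
rewrite /Pr.
under eq_bigr => B _ do rewrite joint_PB.
pose E (B : {ffun 'I_N -> {ffun cell d -> bool}}) := marg_L1 beta (true_dist R js) (recon eps B) <= T0.
have hsum := sumPB _ _ _ _ (qq1 R d N eps js).
rewrite (bigID E) /= in hsum.
have P0 B : 0 <= P B.
  apply: prodr_ge0 => p _; rewrite /qq; case: ifP => _; lra.
have Q0 B : 0 <= Q B.
  by apply: sumr_ge0 => g _; rewrite sqr_ge0.
have thr0 : 0 < thr by rewrite /thr divr_gt0 ?exprn_gt0.
have hbad : \sum_(B | ~~ E B) P B <= \sum_B P B * Q B / thr.
  apply: (le_trans (y := \sum_(B | ~~ E B) P B * Q B / thr)).
    apply: ler_sum => B hB.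
    have hq : thr < Q B by rewrite ltNge; apply: contra hB => /key.
    rewrite -mulrA ler_peMr // ler_pdivlMr // mul1r ltW //.
  rewrite [X in _ <= X](bigID E) /= lerDr.
  by apply: sumr_ge0 => B _; apply: divr_ge0; [apply: mulr_ge0 | apply: ltW].
have hEQ : \sum_B P B * Q B / thr <= 1 / 2.
  rewrite -mulr_suml.
  apply: (le_trans (y := VV R eps * 2 ^+ d / N%:R / thr)).
    by rewrite ler_pM2r ?invr_gt0 //; apply: EQ_bound.
  have -> : VV R eps * 2 ^+ d / N%:R / thr = VV R eps * eps ^+ 2 / 16.
    rewrite /thr /T0 /K expr_div_n !exprMn !sqr_sqrtr ?exprn_ge0 ?ler0n //.
    rewrite exprD; field.
    by rewrite !gt_eqF ?exprn_gt0.
  lra.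
move: hsum hbad hEQ; rewrite /P /E => h1 h2 h3; lra.
Qed.
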